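(* Consider a time-invariant UMCO channel on finite alphabets and suppose that for every time-invariant channel input distribution $\pi^\infty$ the output transition matrix $\mathbf P(\pi^\infty)=\{\mathbf P^{\pi^\infty}(b_0|b_{-1})\}_{b_0,b_{-1}\in\mathbb B}$ is irreducible. Then for every $\pi^\infty$ and every initial distribution $\mu$, $$J(\pi^\infty,\mu)=\nu(\pi^\infty)^T\ell(\pi^\infty)=:J(\pi^\infty),$$ which is independent of $\mu$, where $\nu(\pi^\infty)$ is the unique invariant distribution, $\mathbf P(\pi^\infty)\nu(\pi^\infty)=\nu(\pi^\infty)$. If moreover there is a time-invariant $\pi^{\infty,*}$ with $J(\pi^{\infty,*})=\max_{\pi^\infty}J(\pi^\infty)$, then there exist $V:\mathbb B\to\mathbb R$ such that $$J(\pi^{\infty,*})+V(b_{-1})=\sup_{\pi^\infty(\cdot|b_{-1})}\Big\{\ell(b_{-1},\pi^\infty(b_{-1}))+\sum_{z\in\mathbb B}V(z)\mathbf P^{\pi^\infty}(z|b_{-1})\Big\}\quad\forall b_{-1}\in\mathbb B,$$ and $J(\pi^{\infty,*})=C^{FB,UMCO}_{A^\infty\to B^\infty}=\liminf_{n\to\infty}\frac1n\sup_{\pi^\infty}\mathbf E^{\pi^\infty}_\mu[\sum_{i=0}^{n-1}\log\frac{\mathbf P(B_i|B_{i-1},A_i)}{\mathbf P^{\pi^\infty}(B_i|B_{i-1})}]$ for every $\mu$.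
   Context: Time-invariant UMCO channel $\mathbf P(b_i|b_{i-1},a_i)$ on finite alphabets $\mathbb A,\mathbb B$; time-invariant input $\pi^\infty(a_i|b_{i-1})$; $\mathbf P^{\pi^\infty}(b_i|b_{i-1})=\sum_a\mathbf P(b_i|b_{i-1},a)\pi^\infty(a|b_{i-1})$. $\ell(b,\pi^\infty(b))=\sum_{a}\sum_{b'}\log\frac{\mathbf P(b'|b,a)}{\mathbf P^{\pi^\infty}(b'|b)}\mathbf P(b'|b,a)\pi^\infty(a|b)$, and $\ell(\pi^\infty)\in\mathbb R^{|\mathbb B|}$ is the vector of these values. $J(\pi^\infty,\mu)=\liminf_{n\to\infty}\frac1n\mathbf E^{\pi^\infty}_\mu[\sum_{i=0}^{n-1}\log\frac{\mathbf P(B_i|B_{i-1},A_i)}{\mathbf P^{\pi^\infty}(B_i|B_{i-1})}]$, with $B_{-1}\sim\mu$. *)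

(* Defs.v *)
From mathcomp Require Import all_boot.
From Stdlib Require Import Reals.
Set Implicit Arguments. Unset Strict Implicit. Unset Printing Implicit Defensive.
Open Scope R_scope.

Definition rsum (T : finType) (f : T -> R) : R := \big[Rplus/0%R]_(i : T) f i.

Definition is_dist (T : finType) (q : T -> R) : Prop :=
  (forall t, 0 <= q t) /\ rsum q = 1.

Section UMCO.
Variables (A B : finType).

(* Channel: P b a b' = P(b_i = b' | b_{i-1} = b, a_i = a). *)
Definition is_channel (P : B -> A -> B -> R) : Prop :=
  forall b a, is_dist (P b a).

(* Time-invariant input: pi b a = pi^oo(a_i = a | b_{i-1} = b). *)
Definition is_policy (pi : B -> A -> R) : Prop := forall b, is_dist (pi b).

Variable P : B -> A -> B -> R.

Definition Pq (b : B) (q : A -> R) (b' : B) : R := rsum (fun a => P b a b' * q a).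

(* ell(b, q) = sum_a sum_b' log(P(b'|b,a)/P^q(b'|b)) P(b'|b,a) q(a)
   (Stdlib ln is 0 on nonpositive arguments, giving the 0 log 0 = 0 convention). *)
Definition ellq (b : B) (q : A -> R) : R :=
  rsum (fun a => rsum (fun b' => ln (P b a b' / Pq b q b') * P b a b' * q a)).

Definition Pout (pi : B -> A -> R) (b b' : B) : R := Pq b (pi b) b'.
Definition ell (pi : B -> A -> R) (b : B) : R := ellq b (pi b).

Fixpoint ptrans (pi : B -> A -> R) (n : nat) (b b' : B) : R :=
  match n with
  | O => if b == b' then 1 else 0
  | S m => rsum (fun z => ptrans pi m b z * Pout pi z b')
  end.

Definition out_irreducible (pi : B -> A -> R) : Prop :=
  forall b b', exists n, 0 < ptrans pi n b b'.

Definition is_invariant (pi : B -> A -> R) (nu : B -> R) : Prop :=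
  is_dist nu /\ forall b', rsum (fun b => Pout pi b b' * nu b) = nu b'.

(* Distribution of B_{i-1} when B_{-1} ~ mu. *)
Fixpoint distB (pi : B -> A -> R) (mu : B -> R) (i : nat) (b' : B) : R :=
  match i with
  | O => mu b'
  | S m => rsum (fun b => distB pi mu m b * Pout pi b b')
  end.

(* E^{pi}_mu [ log P(B_i|B_{i-1},A_i) / P^{pi}(B_i|B_{i-1}) ], computed from the
   joint law of (B_{i-1}, A_i, B_i). *)
Definition termExp (pi : B -> A -> R) (mu : B -> R) (i : nat) : R :=
  rsum (fun b => rsum (fun a => rsum (fun b' =>
    distB pi mu i b * pi b a * P b a b' * ln (P b a b' / Pout pi b b')))).

Definition expSum (pi : B -> A -> R) (mu : B -> R) (n : nat) : R :=
  \big[Rplus/0%R]_(0 <= i < n) termExp pi mu i.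

Definition Jinv (pi : B -> A -> R) (nu : B -> R) : R := rsum (fun b => nu b * ell pi b).

End UMCO.

Definition is_liminf (u : nat -> R) (l : R) : Prop :=
  (forall eps, 0 < eps -> exists N, forall n, (N <= n)%nat -> l - eps < u n) /\
  (forall eps, 0 < eps -> forall N, exists n, (N <= n)%nat /\ u n < l + eps).

(* Main.v *)
Require Import Defs.
From HB Require Import structures.
From mathcomp Require Import all_boot all_order all_algebra.
From mathcomp Require Import Rstruct.
From Stdlib Require Import Reals Lra FunctionalExtensionality Classical.
Set Implicit Arguments. Unset Strict Implicit. Unset Printing Implicit Defensive.

Module LinAlg.
Import Order.TTheory GRing.Theory Num.Theory.
Local Open Scope ring_scope.
Lemma LA_ord (F : fieldType) n (M : 'I_n -> 'I_n -> F) (v : 'I_n -> F) :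
 (forall w : 'I_n -> F, (forall j, \sum_i w i * M i j = 0) -> \sum_i w i * v i = 0) ->
 exists h : 'I_n -> F, forall i, \sum_j M i j * h j = v i.
Proof.
move=> Hw.
pose N : 'M[F]_n := \matrix_(i, j) M j i.
pose vr : 'M[F]_(1, n) := \row_j v j.
have HN a b : N a b = M b a by rewrite mxE.
have: (vr <= N)%MS.
  rewrite submxE; apply/eqP/matrixP => i k; rewrite !mxE.
  have Hc := mulmx_coker N.
  have := Hw (fun j => cokermx N j k).
  have -> : \sum_j vr i j * cokermx N j k = \sum_i0 cokermx N i0 k * v i0.
    by apply: eq_bigr => j _; rewrite mxE mulrC.
  apply=> j.
  have := congr1 (fun A : 'M[F]_n => A j k) Hc; rewrite !mxE => H0.
  by rewrite -[RHS]H0; apply: eq_bigr => l _; rewrite HN mulrC.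
case/submxP => D HD.
exists (fun j => D 0 j) => i.
have := congr1 (fun A : 'M[F]_(1,n) => A 0 i) HD; rewrite !mxE => ->.
by apply: eq_bigr => j _; rewrite mxE mulrC.
Qed.

Lemma LA_fin (F : fieldType) (T : finType) (M : T -> T -> F) (v : T -> F) :
 (forall w : T -> F, (forall j, \sum_i w i * M i j = 0) -> \sum_i w i * v i = 0) ->
 exists h : T -> F, forall i, \sum_j M i j * h j = v i.
Proof.
move=> Hw.
have E (G : T -> F) : \sum_(x : T) G x = \sum_(i < #|T|) G (enum_val i).
  by rewrite (reindex (enum_val : 'I_#|T| -> T)) //; apply: onW_bij; apply: enum_val_bij.
case: (@LA_ord F #|T| (fun i j => M (enum_val i) (enum_val j)) (fun i => v (enum_val i))) => [w Hw'|h Hh].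
  have := Hw (fun x => w (enum_rank x)).
  rewrite E; under eq_bigr do rewrite enum_valK.
  apply=> j; rewrite -(enum_rankK j) E.
  under eq_bigr do rewrite enum_valK.
  exact: Hw'.
exists (fun x => h (enum_rank x)) => i.
rewrite -(enum_rankK i) -(Hh (enum_rank i)) E.
by apply: eq_bigr => j _; rewrite enum_valK.
Qed.
End LinAlg.

Open Scope R_scope.

Lemma LA_R (T : finType) (M : T -> T -> R) (v : T -> R) :
 (forall w : T -> R, (forall j, rsum (fun i => w i * M i j) = 0) -> rsum (fun i => w i * v i) = 0) ->
 exists h : T -> R, forall i, rsum (fun j => M i j * h j) = v i.
Proof. exact: (@LinAlg.LA_fin R T M v). Qed.

Section RsumLemmas.
Variable T : finType.
Implicit Types f g : T -> R.

Lemma rsum_ext f g : (forall i, f i = g i) -> rsum f = rsum g.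
Proof. by move=> H; apply: eq_bigr => i _. Qed.

Lemma rsumD f g : rsum (fun i => f i + g i) = rsum f + rsum g.
Proof. exact: big_split. Qed.

Lemma rsumZ c f : rsum (fun i => c * f i) = c * rsum f.
Proof. by rewrite /rsum big_distrr. Qed.

Lemma rsumZr c f : rsum (fun i => f i * c) = rsum f * c.
Proof. by rewrite /rsum big_distrl. Qed.

Lemma rsum0 : rsum (fun _ : T => 0) = 0.
Proof. by rewrite /rsum big1. Qed.

Lemma rsumN f : rsum (fun i => - f i) = - rsum f.
Proof.
have : rsum f + rsum (fun i => - f i) = 0.
  by rewrite -rsumD -rsum0; apply: rsum_ext => i; ring.
lra.
Qed.

Lemma rsumB f g : rsum (fun i => f i - g i) = rsum f - rsum g.
Proof. by rewrite /Rminus -rsumN -rsumD. Qed.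

Lemma rsum_const c : rsum (fun _ : T => c) = c * INR #|T|.
Proof.
rewrite /rsum; elim: (enum T) => [|x s IH].
Abort.

Lemma rsum_le f g : (forall i, f i <= g i) -> rsum f <= rsum g.
Proof.
move=> H; rewrite /rsum; apply: (big_ind2 (fun x y => x <= y)) => //.
- by apply: Rle_refl.
- by move=> *; apply: Rplus_le_compat.
Qed.

Lemma rsum_ge0 f : (forall i, 0 <= f i) -> 0 <= rsum f.
Proof. by move=> H; rewrite -rsum0; apply: rsum_le. Qed.

Lemma rsum_abs f : Rabs (rsum f) <= rsum (fun i => Rabs (f i)).
Proof.
rewrite /rsum; apply: (big_ind2 (fun x y => Rabs x <= y)).
- by rewrite Rabs_R0; apply: Rle_refl.
- move=> x1 x2 y1 y2 H1 H2; apply: Rle_trans (Rabs_triang _ _) _; lra.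
- by move=> i _; apply: Rle_refl.
Qed.

Lemma rsum_split f i0 : rsum f = f i0 + rsum (fun i => if i == i0 then 0 else f i).
Proof.
rewrite /rsum (bigD1 i0) //=; congr (_ + _).
rewrite [in RHS](bigD1 i0) //= eqxx Rplus_0_l.
by apply: eq_bigr => i /negbTE ->.
Qed.

Lemma rsum_single f i0 : (forall i, i != i0 -> f i = 0) -> rsum f = f i0.
Proof.
move=> H; rewrite (rsum_split f i0) -[RHS]Rplus_0_r; congr (_ + _).
rewrite -[RHS]rsum0; apply: rsum_ext => i; case: eqP => // Hne; apply: H; exact/eqP.
Qed.

Lemma rsum_ge_single f i0 : (forall i, 0 <= f i) -> f i0 <= rsum f.
Proof.
move=> H; rewrite (rsum_split f i0).
have : 0 <= rsum (fun i => if i == i0 then 0 else f i).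
  by apply: rsum_ge0 => i; case: eqP => _ //; apply: Rle_refl.
lra.
Qed.

Lemma rsum_eq0 f : (forall i, 0 <= f i) -> rsum f = 0 -> forall i, f i = 0.
Proof.
move=> H H0 i; have := rsum_ge_single i H; have := H i; lra.
Qed.

Lemma rsum_delta f j : rsum (fun i => f i * (if i == j then 1 else 0)) = f j.
Proof.
rewrite (@rsum_single _ j) ?eqxx ?Rmult_1_r //.
by move=> i /negbTE ->; rewrite Rmult_0_r.
Qed.

Lemma rsum_delta_l f j : rsum (fun i => (if j == i then 1 else 0) * f i) = f j.
Proof.
rewrite (@rsum_single _ j) ?eqxx ?Rmult_1_l //.
by move=> i; rewrite eq_sym => /negbTE ->; rewrite Rmult_0_l.
Qed.

Lemma ex_min (x0 : T) (h : T -> R) : exists i, forall j, h i <= h j.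
Proof.
suff [i Hi] : exists i, forall j, j \in enum T -> h i <= h j.
  by exists i => j; apply: Hi; rewrite mem_enum.
elim: (enum T) => [|x s [i IH]]; first by exists x0.
case: (Rle_lt_dec (h x) (h i)) => Hx.
- exists x => j; rewrite in_cons => /orP [/eqP ->|Hj]; first exact: Rle_refl.
  apply: Rle_trans Hx _; exact: IH.
- exists i => j; rewrite in_cons => /orP [/eqP ->|Hj]; first lra.
  exact: IH.
Qed.

End RsumLemmas.

Lemma rsum_exch (T U : finType) (f : T -> U -> R) :
  rsum (fun i => rsum (fun j => f i j)) = rsum (fun j => rsum (fun i => f i j)).
Proof. exact: exchange_big. Qed.

Section Chain.
Variables (A B : finType) (P : B -> A -> B -> R).

Lemma Pq_dist b q : is_channel P -> is_dist q -> is_dist (Pq P b q).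
Proof.
move=> hP [q0 q1]; split.
- move=> b'; apply: rsum_ge0 => a; apply: Rmult_le_pos => //; exact: (proj1 (hP b a)).
- rewrite /Pq rsum_exch -[RHS]q1; apply: rsum_ext => a.
  by rewrite rsumZr (proj2 (hP b a)) Rmult_1_l.
Qed.

Variable pi : B -> A -> R.
Hypothesis hK : forall b, is_dist (Pout P pi b).
Hypothesis hirr : out_irreducible P pi.

Definition inv (w : B -> R) := forall b', rsum (fun b => Pout P pi b b' * w b) = w b'.

Lemma ptrans_ge0 n b b' : 0 <= ptrans P pi n b b'.
Proof.
elim: n b b' => [|n IH] b b' /=; first by case: eqP => _; lra.
apply: rsum_ge0 => z; apply: Rmult_le_pos; first exact: IH.
exact: (proj1 (hK z)).
Qed.

Lemma inv_ptrans w : inv w -> forall n b', rsum (fun b => w b * ptrans P pi n b b') = w b'.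
Proof.
move=> Hw; elim=> [|n IH] b' /=.
  by rewrite -[RHS](rsum_delta w b'); apply: rsum_ext => b.
rewrite -[RHS]Hw.
transitivity (rsum (fun b => rsum (fun z => w b * ptrans P pi n b z * Pout P pi z b'))).
  apply: rsum_ext => b; rewrite -rsumZ; apply: rsum_ext => z; ring.
rewrite rsum_exch; apply: rsum_ext => z.
by rewrite rsumZr IH Rmult_comm.
Qed.

Lemma inv_support w : inv w -> (forall b, 0 <= w b) -> forall b b', 0 < w b -> 0 < w b'.
Proof.
move=> Hw H0 b b' Hb; have [n Hn] := hirr b b'.
rewrite -(inv_ptrans Hw n b').
apply: Rlt_le_trans (rsum_ge_single b _).
  exact: Rmult_lt_0_compat.
move=> c; apply: Rmult_le_pos => //; exact: ptrans_ge0.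
Qed.

Lemma inv_abs w : inv w -> inv (fun b => Rabs (w b)).
Proof.
move=> Hw.
pose d b' := rsum (fun b => Pout P pi b b' * Rabs (w b)) - Rabs (w b').
have d0 : forall b', 0 <= d b'.
  move=> b'; rewrite /d -{1}(Hw b').
  have := rsum_abs (fun b => Pout P pi b b' * w b).
  have -> : rsum (fun i => Rabs (Pout P pi i b' * w i)) = rsum (fun b => Pout P pi b b' * Rabs (w b)).
    apply: rsum_ext => b; rewrite Rabs_mult Rabs_pos_eq //; exact: (proj1 (hK b)).
  lra.
have ds : rsum d = 0.
  rewrite /d rsumB rsum_exch.
  have -> : rsum (fun j => rsum (fun i => Pout P pi j i * Rabs (w j))) = rsum (fun b => Rabs (w b)).
    apply: rsum_ext => b; by rewrite rsumZr (proj2 (hK b)) Rmult_1_l.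
  ring.
move=> b'; have := rsum_eq0 d0 ds b'; rewrite /d; lra.
Qed.

Lemma inv_lin a c w1 w2 : inv w1 -> inv w2 -> inv (fun b => a * w1 b + c * w2 b).
Proof.
move=> H1 H2 b'; rewrite -(H1 b') -(H2 b') -!rsumZ -rsumD.
apply: rsum_ext => b; ring.
Qed.

Lemma inv_sum0_pos w : inv w -> rsum w = 0 -> forall b, ~ (0 < w b).
Proof.
move=> Hw Hs b Hb.
pose p b := /2 * Rabs (w b) + /2 * w b.
have Hp : inv p by apply: inv_lin => //; apply: inv_abs.
have p0 : forall c, 0 <= p c.
  move=> c; rewrite /p; have := Rle_abs (w c); have := Rabs_pos (w c).
  have := Rabs_Ropp (w c); have := Rle_abs (- w c); lra.
have pb : 0 < p b by rewrite /p Rabs_pos_eq; lra.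
have wpos : forall c, 0 < w c.
  move=> c; have := inv_support Hp p0 c pb; rewrite /p.
  case: (Rle_lt_dec (w c) 0) => // Hc.
  rewrite Rabs_left1 //; lra.
have := rsum_ge_single (f:=w) b (fun c => Rlt_le _ _ (wpos c)).
lra.
Qed.

Lemma inv_sum0 w : inv w -> rsum w = 0 -> forall b, w b = 0.
Proof.
move=> Hw Hs b.
have H1 := inv_sum0_pos Hw Hs (b:=b).
have Hw' : inv (fun b => -1 * w b + 0 * w b) by apply: inv_lin.
have Hs' : rsum (fun b => -1 * w b + 0 * w b) = 0.
  rewrite rsumD !rsumZ Hs; ring.
have H2 := inv_sum0_pos Hw' Hs' (b:=b).
lra.
Qed.

Lemma inv_unique nu w : inv nu -> is_dist nu -> inv w -> forall b, w b = rsum w * nu b.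
Proof.
move=> Hnu [_ nu1] Hw b.
have Hi : inv (fun b => 1 * w b + (- rsum w) * nu b) by apply: inv_lin.
have Hs : rsum (fun b => 1 * w b + (- rsum w) * nu b) = 0.
  rewrite rsumD !rsumZ nu1; ring.
have := inv_sum0 Hi Hs b; lra.
Qed.

Lemma inv_exists (b0 : B) : exists nu, inv nu /\ is_dist nu.
Proof.
case: (classic (exists w b, inv w /\ w b <> 0)) => [[w [b [Hw Hb]]]|Hno].
- pose s := rsum (fun c => Rabs (w c)).
  have hs : 0 < s.
    apply: Rlt_le_trans (rsum_ge_single b (fun c => Rabs_pos (w c))).
    exact: Rabs_pos_lt.
  exists (fun c => / s * Rabs (w c) + 0 * w c); split.
    by apply: inv_lin => //; apply: inv_abs.
  split.
    move=> c; have := Rabs_pos (w c); have := Rinv_0_lt_compat _ hs.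
    move=> h1 h2; rewrite Rmult_0_l Rplus_0_r; apply: Rmult_le_pos; lra.
  rewrite rsumD !rsumZ -/s; field; lra.
- exfalso.
  case: (@LA_R B (fun i j => (if i == j then 1 else 0) - Pout P pi i j) (fun _ => 1)) => [|h Hh].
    move=> w Hw.
    have Hwi : inv w.
      move=> j; have := Hw j.
      rewrite (rsum_ext (g:=fun i => w i * (if i == j then 1 else 0) - Pout P pi i j * w i)); last by move=> i; ring.
      rewrite rsumB rsum_delta; lra.
    have w0 : forall b, w b = 0.
      move=> b; apply: NNPP => Hb; apply: Hno; exists w, b; split => //.
    rewrite -[RHS](rsum0 B); apply: rsum_ext => i; rewrite w0; ring.
  have [i Hi] := ex_min b0 h.
  have := Hh i.
  rewrite (rsum_ext (g:=fun j => (if i == j then 1 else 0) * h j - Pout P pi i j * h j)); last by move=> j; ring.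
  rewrite rsumB rsum_delta_l.
  have : rsum (fun j => Pout P pi i j * h i) <= rsum (fun j => Pout P pi i j * h j).
    apply: rsum_le => j; apply: Rmult_le_compat_l => //; exact: (proj1 (hK i)).
  rewrite rsumZr (proj2 (hK i)); lra.
Qed.

Lemma poisson nu : inv nu -> is_dist nu ->
  exists h : B -> R, forall b,
    ell P pi b = Jinv P pi nu + h b - rsum (fun j => Pout P pi b j * h j).
Proof.
move=> Hnu Hd.
case: (@LA_R B (fun i j => (if i == j then 1 else 0) - Pout P pi i j)
                        (fun i => ell P pi i - Jinv P pi nu)) => [|h Hh].
  move=> w Hw.
  have Hwi : inv w.
    move=> j; have := Hw j.
    rewrite (rsum_ext (g:=fun i => w i * (if i == j then 1 else 0) - Pout P pi i j * w i)); last by move=> i; ring.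
    rewrite rsumB rsum_delta; lra.
  have E := inv_unique Hnu Hd Hwi.
  rewrite (rsum_ext (g:=fun i => rsum w * (nu i * ell P pi i) - (rsum w * Jinv P pi nu) * nu i)); last first.
    by move=> i; rewrite E; ring.
  rewrite rsumB rsumZ rsumZ (proj2 Hd) /Jinv; ring.
exists h => b; have := Hh b.
rewrite (rsum_ext (g:=fun j => (if b == j then 1 else 0) * h j - Pout P pi b j * h j)); last by move=> j; ring.
rewrite rsumB rsum_delta_l; lra.
Qed.

End Chain.

Lemma liminf_bound (u : nat -> R) l C :
  (forall n, (1 <= n)%nat -> l - C / INR n <= u n /\ u n <= l + C / INR n) -> is_liminf u l.
Proof.
move=> H.
have key : forall eps, 0 < eps -> exists N, (1 <= N)%nat /\ forall n, (N <= n)%nat -> C / INR n < eps.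
  move=> eps he; have [N HN] := INR_archimed eps (Rabs C) he.
  exists (maxn 1 N); split; first by rewrite leq_maxl.
  move=> n Hn.
  have Hn1 : (1 <= n)%nat by apply: leq_trans Hn; rewrite leq_maxl.
  have HNn : INR N <= INR n by apply: le_INR; apply/leP; apply: leq_trans Hn; rewrite leq_maxr.
  have Hpos : 0 < INR n by apply: lt_0_INR; apply/ltP.
  have : C < eps * INR n.
    have := Rle_abs C; have := Rmult_le_compat_r eps _ _ (Rlt_le _ _ he) HNn; lra.
  move=> Hc.
  apply: (Rmult_lt_reg_r (INR n)) => //.
  have -> : C / INR n * INR n = C by field; lra.
  lra.
split.
- move=> eps he; have [N [N1 HN]] := key eps he; exists N => n Hn.
  have := H n (leq_trans N1 Hn); have := HN n Hn; lra.
- move=> eps he N0; have [N [N1 HN]] := key eps he; exists (maxn N0 N); split.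
    by rewrite leq_maxl.
  have Hn : (N <= maxn N0 N)%nat by rewrite leq_maxr.
  have := H _ (leq_trans N1 Hn); have := HN _ Hn; lra.
Qed.

Lemma big_recR (F : nat -> R) n :
  \big[Rplus/0]_(0 <= i < n.+1) F i = \big[Rplus/0]_(0 <= i < n) F i + F n.
Proof. by rewrite big_nat_recr. Qed.

Section Tele.
Variables (A B : finType) (P : B -> A -> B -> R) (pi : B -> A -> R) (mu : B -> R).
Hypothesis hK : forall b, is_dist (Pout P pi b).
Hypothesis hmu : is_dist mu.

Lemma distB_dist i : is_dist (distB P pi mu i).
Proof.
elim: i => [|i [H0 H1]] //=; split.
- move=> b'; apply: rsum_ge0 => b; apply: Rmult_le_pos => //; exact: (proj1 (hK b)).
- rewrite rsum_exch -[RHS]H1; apply: rsum_ext => b.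
  by rewrite rsumZ (proj2 (hK b)) Rmult_1_r.
Qed.

Definition Ex i (f : B -> R) := rsum (fun b => distB P pi mu i b * f b).

Lemma Ex_step i h : Ex i.+1 h = Ex i (fun b => rsum (fun j => Pout P pi b j * h j)).
Proof.
rewrite /Ex /=.
transitivity (rsum (fun b' => rsum (fun b => distB P pi mu i b * (Pout P pi b b' * h b')))).
  apply: rsum_ext => b'; rewrite -rsumZr; apply: rsum_ext => b; ring.
rewrite rsum_exch; apply: rsum_ext => b; by rewrite rsumZ.
Qed.

Lemma termExp_Ex i : termExp P pi mu i = Ex i (ell P pi).
Proof.
rewrite /termExp /Ex; apply: rsum_ext => b.
rewrite /ell /ellq -rsumZ; apply: rsum_ext => a.
rewrite -rsumZ; apply: rsum_ext => b'; rewrite /Pout; ring.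
Qed.

Lemma Ex_bound i h : Rabs (Ex i h) <= rsum (fun b => Rabs (h b)).
Proof.
have [d0 d1] := distB_dist i.
apply: Rle_trans (rsum_abs _) _; apply: rsum_le => b.
rewrite Rabs_mult Rabs_pos_eq //.
have := rsum_ge_single b d0; rewrite d1 => Hd.
have := Rabs_pos (h b); have := Rmult_le_compat_r (Rabs (h b)) _ _ (Rabs_pos (h b)) Hd.
lra.
Qed.

Lemma Ex_le0 i f : (forall b, f b <= 0) -> Ex i f <= 0.
Proof.
move=> H; have [d0 _] := distB_dist i.
rewrite -(rsum0 B); apply: rsum_le => b.
have := Rmult_le_compat_l _ _ _ (d0 b) (H b); lra.
Qed.

Lemma expSum_id J h n :
  expSum P pi mu n = INR n * J + Ex 0 h - Ex n h +
    \big[Rplus/0]_(0 <= i < n) Ex i (fun b => ell P pi b - J - h b +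
                                      rsum (fun j => Pout P pi b j * h j)).
Proof.
elim: n => [|n IH].
  rewrite /expSum !big_geq //=; ring.
rewrite /expSum in IH *; rewrite !big_recR IH termExp_Ex S_INR Ex_step.
have [_ d1] := distB_dist n.
have -> : Ex n (fun b => ell P pi b - J - h b + rsum (fun j => Pout P pi b j * h j)) =
  Ex n (ell P pi) - J * rsum (distB P pi mu n) - Ex n h + Ex n (fun b => rsum (fun j => Pout P pi b j * h j)).
  rewrite /Ex -rsumZ -!rsumB -rsumD; apply: rsum_ext => b; ring.
rewrite d1; ring.
Qed.

End Tele.

Lemma big_le0 (F : nat -> R) n : (forall i, F i <= 0) -> \big[Rplus/0]_(0 <= i < n) F i <= 0.
Proof.
move=> H; elim: n => [|n IH]; first by rewrite big_geq //; apply: Rle_refl.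
rewrite big_recR; have := H n; lra.
Qed.

Lemma big_eq0 (F : nat -> R) n : (forall i, F i = 0) -> \big[Rplus/0]_(0 <= i < n) F i = 0.
Proof.
move=> H; elim: n => [|n IH]; first by rewrite big_geq.
rewrite big_recR IH H; ring.
Qed.

Lemma avg_bounds (A B : finType) (P : B -> A -> B -> R) (pi : B -> A -> R) (mu : B -> R)
  (hK : forall b, is_dist (Pout P pi b)) (hmu : is_dist mu) (J : R) (h : B -> R) :
  let f := fun b => ell P pi b - J - h b + rsum (fun j => Pout P pi b j * h j) in
  let M := rsum (fun b => Rabs (h b)) in
  forall n, (1 <= n)%nat ->
    ((forall b, f b <= 0) -> / INR n * expSum P pi mu n <= J + 2 * M / INR n) /\
    ((forall b, f b = 0) -> J - 2 * M / INR n <= / INR n * expSum P pi mu n).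
Proof.
move=> f M n Hn.
have Hpos : 0 < INR n by apply: lt_0_INR; apply/ltP.
rewrite (expSum_id hK hmu J h n) -/f.
have E0 := Ex_bound hK hmu 0 h; have En := Ex_bound hK hmu n h.
rewrite -/M in E0 En.
have -> : / INR n * (INR n * J + Ex P pi mu 0 h - Ex P pi mu n h +
     \big[Rplus/0]_(0 <= i < n) Ex P pi mu i f) =
   J + (Ex P pi mu 0 h - Ex P pi mu n h + \big[Rplus/0]_(0 <= i < n) Ex P pi mu i f) * / INR n.
  field; lra.
have Hi := Rinv_0_lt_compat _ Hpos.
rewrite /Rdiv.
split => Hf.
- have S0 : \big[Rplus/0]_(0 <= i < n) Ex P pi mu i f <= 0.
    by apply: big_le0 => i; apply: Ex_le0.
  apply: Rplus_le_compat_l; apply: Rmult_le_compat_r; first lra.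
  have := Rle_abs (Ex P pi mu 0 h); have := Rle_abs (- Ex P pi mu n h); rewrite Rabs_Ropp; lra.
- have S0 : \big[Rplus/0]_(0 <= i < n) Ex P pi mu i f = 0.
    apply: big_eq0 => i; rewrite /Ex -[RHS](rsum0 B); apply: rsum_ext => b; rewrite Hf; ring.
  rewrite S0.
  have : - (2 * M) <= Ex P pi mu 0 h - Ex P pi mu n h + 0.
    have := Rle_abs (- Ex P pi mu 0 h); have := Rle_abs (Ex P pi mu n h); rewrite Rabs_Ropp; lra.
  move=> H2; have := Rmult_le_compat_r _ _ _ (Rlt_le _ _ Hi) H2.
  have -> : - (2 * M) * / INR n = - (2 * M * / INR n) by ring.
  lra.
Qed.

Theorem mainTheorem8 (A B : finType) (P : B -> A -> B -> R)
  (hA : (0 < #|A|)%nat) (hB : (0 < #|B|)%nat)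
  (hP : is_channel P)
  (hirr : forall pi : B -> A -> R, is_policy pi -> out_irreducible P pi) :
  (* Part 1: J(pi, mu) = nu(pi)^T ell(pi), independent of mu. *)
  (forall pi : B -> A -> R, is_policy pi ->
     exists nu : B -> R,
       is_invariant P pi nu /\
       (forall nu' : B -> R, is_invariant P pi nu' -> nu' = nu) /\
       (forall mu : B -> R, is_dist mu ->
          is_liminf (fun n => / INR n * expSum P pi mu n) (Jinv P pi nu))) /\
  (* Part 2: if an optimal time-invariant pistar exists ... *)
  (forall (pistar : B -> A -> R) (nustar : B -> R),
     is_policy pistar -> is_invariant P pistar nustar ->
     (forall (pi : B -> A -> R) (nu : B -> R),
        is_policy pi -> is_invariant P pi nu -> Jinv P pi nu <= Jinv P pistar nustar) ->
     (exists V : B -> R, forall b : B,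
        is_lub (fun x => exists q : A -> R, is_dist q /\
                  x = ellq P b q + rsum (fun z => V z * Pq P b q z))
               (Jinv P pistar nustar + V b)) /\
     (forall mu : B -> R, is_dist mu ->
        exists c : nat -> R,
          (forall n, is_lub (fun x => exists pi : B -> A -> R, is_policy pi /\
                                x = / INR n * expSum P pi mu n) (c n)) /\
          is_liminf c (Jinv P pistar nustar))).
Proof.
have Kd : forall pi, is_policy pi -> forall b, is_dist (Pout P pi b).
  by move=> pi hpi b; apply: Pq_dist hP (hpi b).
case/card_gt0P: hB => b0 _.
split.
- move=> pi hpi.
  have [nu [Hinv Hd]] := inv_exists (Kd pi hpi) b0.
  exists nu; split; first by split.
  split.
    move=> nu' [Hd' Hi']; apply: functional_extensionality => b.
    by rewrite (inv_unique (Kd pi hpi) (hirr pi hpi) Hinv Hd Hi' b) (proj2 Hd') Rmult_1_l.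
  move=> mu hmu.
  have [h Hh] := poisson (Kd pi hpi) (hirr pi hpi) Hinv Hd.
  apply: (liminf_bound (C := 2 * rsum (fun b => Rabs (h b)))) => n Hn.
  have [_ H2] := avg_bounds (Kd pi hpi) hmu (Jinv P pi nu) h Hn.
  have [H1 _] := avg_bounds (Kd pi hpi) hmu (Jinv P pi nu) h Hn.
  have Hf : forall b, ell P pi b - Jinv P pi nu - h b + rsum (fun j => Pout P pi b j * h j) = 0.
    by move=> b; rewrite Hh; ring.
  split; [apply: H2 | apply: H1] => b; rewrite Hf //; apply: Rle_refl.
- move=> pistar nustar hps [Hd Hinv] hopt.
  have [h Hh] := poisson (Kd pistar hps) (hirr pistar hps) Hinv Hd.
  set J := Jinv P pistar nustar in Hh hopt *.
  have acoe : forall b q, is_dist q -> ellq P b q + rsum (fun z => h z * Pq P b q z) <= J + h b.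
    move=> b q hq; apply: Rnot_lt_le => Hlt.
    pose pi' := fun c => if c == b then q else pistar c.
    have hpi' : is_policy pi' by move=> c; rewrite /pi'; case: eqP.
    have [nu' [Hi' Hd']] := inv_exists (Kd pi' hpi') b0.
    have hpos : 0 < nu' b.
      have [c Hc] : exists c, 0 < nu' c.
        apply: NNPP => Hn.
        have Z : forall c, nu' c = 0.
          move=> c; have := proj1 Hd' c; case: (Rle_lt_dec (nu' c) 0) => H0 H1; first lra.
          by exfalso; apply: Hn; exists c.
        have := proj2 Hd'; rewrite (rsum_ext (g := fun _ => 0)) ?rsum0 //; lra.
      exact: (inv_support (Kd pi' hpi') (hirr pi' hpi') Hi' (proj1 Hd') b Hc).
    pose g c := ell P pi' c + rsum (fun z => Pout P pi' c z * h z) - h c - J.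
    have Hg : rsum (fun c => nu' c * g c) = Jinv P pi' nu' - J.
      rewrite (rsum_ext (g := fun c => nu' c * ell P pi' c +
                rsum (fun z => Pout P pi' c z * nu' c * h z) - nu' c * h c - J * nu' c)); last first.
        move=> c.
        have -> : rsum (fun z => Pout P pi' c z * nu' c * h z) = nu' c * rsum (fun z => Pout P pi' c z * h z).
          by rewrite -rsumZ; apply: rsum_ext => z; ring.
        rewrite /g; ring.
      rewrite !rsumB rsumD rsumZ (proj2 Hd') rsum_exch /Jinv.
      rewrite (rsum_ext (f := fun j => rsum (fun i => Pout P pi' i j * nu' i * h j))
                        (g := fun j => nu' j * h j)); first ring.
      by move=> z; rewrite rsumZr Hi'.
    have g0 : forall c, c != b -> g c = 0.
      move=> c /negbTE Hc; rewrite /g /ell /Pout /pi' Hc.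
      have := Hh c; rewrite /ell /Pout => ->; ring.
    have gb : g b = ellq P b q + rsum (fun z => h z * Pq P b q z) - h b - J.
      rewrite /g /ell /Pout /pi' eqxx; congr (_ + _ - _ - _).
      by apply: rsum_ext => z; ring.
    have Hsum : rsum (fun c => nu' c * g c) = nu' b * g b.
      by apply: rsum_single => c /g0 ->; ring.
    have := hopt pi' nu' hpi' (conj Hd' Hi').
    have : 0 < nu' b * g b by apply: Rmult_lt_0_compat => //; rewrite gb; lra.
    lra.
  split.
  + exists h => b; split.
    * by move=> x [q [hq ->]]; apply: acoe.
    * move=> y Hy; apply: Hy; exists (pistar b); split; first exact: hps.
      have := Hh b; rewrite /ell /Pout => ->.
      rewrite (rsum_ext (f := fun z => h z * Pq P b (pistar b) z)
                        (g := fun z => Pq P b (pistar b) z * h z)); last by move=> z; ring.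
      ring.
  + move=> mu hmu.
    pose M := rsum (fun b => Rabs (h b)).
    have M0 : 0 <= M by apply: rsum_ge0 => b; apply: Rabs_pos.
    pose S n := fun x => exists pi : B -> A -> R, is_policy pi /\ x = / INR n * expSum P pi mu n.
    have upper : forall n pi, is_policy pi -> (1 <= n)%nat ->
        / INR n * expSum P pi mu n <= J + 2 * M / INR n.
      move=> n pi hpi Hn.
      have [H1 _] := avg_bounds (Kd pi hpi) hmu J h Hn; apply: H1 => b.
      have := acoe b (pi b) (hpi b); rewrite /ell /Pout.
      rewrite (rsum_ext (f := fun z => h z * Pq P b (pi b) z)
                        (g := fun z => Pq P b (pi b) z * h z)); last by move=> z; ring.
      lra.
    have lower : forall n, (1 <= n)%nat -> J - 2 * M / INR n <= / INR n * expSum P pistar mu n.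
      move=> n Hn; have [_ H2] := avg_bounds (Kd pistar hps) hmu J h Hn; apply: H2 => b.
      rewrite Hh; ring.
    have bnd : forall n, bound (S n).
      move=> n; exists (Rabs J + 2 * M) => x [pi [hpi ->]].
      case: n => [|n].
        rewrite /expSum big_geq // Rmult_0_r; have := Rabs_pos J; lra.
      have Hn : (1 <= n.+1)%nat by [].
      apply: Rle_trans (upper _ _ hpi Hn) _.
      have Hpos : 0 < INR n.+1 by apply: lt_0_INR; apply/ltP.
      have : 2 * M / INR n.+1 <= 2 * M.
        have H1 : 1 <= INR n.+1 by rewrite S_INR; have := pos_INR n; lra.
        apply: (Rmult_le_reg_r (INR n.+1)) => //.
        have -> : 2 * M / INR n.+1 * INR n.+1 = 2 * M by field; lra.
        have := Rmult_le_compat_l (2 * M) _ _ ltac:(lra) H1; lra.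
      have := Rle_abs J; lra.
    have ne : forall n, exists x, S n x.
      by move=> n; exists (/ INR n * expSum P pistar mu n), pistar.
    exists (fun n => proj1_sig (completeness (S n) (bnd n) (ne n))); split.
      by move=> n; case: (completeness _ _ _).
    apply: (liminf_bound (C := 2 * M)) => n Hn.
    case: (completeness _ _ _) => c [Hub Hlub] /=; split.
    * apply: Rle_trans (lower n Hn) _; apply: Hub; exists pistar; split => //.
    * apply: Hlub => x [pi [hpi ->]]; exact: upper.
Qed.
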